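(* Let $R$ be a principal ideal domain. For any two strata $S,T$ of $\mathfrak{A}_2$ and every $q>0$, $\operatorname{Ext}^q_{\operatorname{Rep}(Q_{\mathfrak{A}_2},\rho_{\mathfrak{A}_2})}(I_S,I_T)=0$.
   Context: $\mathfrak{A}_2$ is the stratification of $S^2$ into two points $P_1,P_2$ on a great circle, the two open arcs $E_1,E_2$ between them, and the two open hemispheres $H_1,H_2$. Its quiver $(Q_{\mathfrak{A}_2},\rho_{\mathfrak{A}_2})$ has one vertex per stratum, an arrow $S\to T$ whenever $S\subsetneq\overline{T}$ (namely $P_i\to E_j$, $E_j\to H_k$, $P_i\to H_k$), and relations identifying all paths with the same endpoints; $\operatorname{Rep}$ denotes the category of representations by $R$-modules satisfying the relations. For a stratum $S$, $I_S$ is the representation with $R$ at $S$ and at every vertex $T$ with $T\subset\overline{S}$ (i.e. having a path to $S$), $0$ at all other vertices, identity maps on arrows between vertices carrying $R$ and zero maps otherwise; it corresponds to the sheaf $i_!R_{\overline S}$, $i:\overline S\hookrightarrow S^2$. *)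

(* Defs.v *)
From HB Require Import structures.
From mathcomp Require Import all_boot all_order all_algebra.
From Stdlib Require Import Relations.
Set Implicit Arguments. Set Strict Implicit. Unset Printing Implicit Defensive.
Import GRing.Theory.
Local Open Scope ring_scope.

(** Strata of A_2 : points P1 P2, open arcs E1 E2, open hemispheres H1 H2. *)
Inductive stratum := P1 | P2 | E1 | E2 | H1 | H2.

(** [strat_lt S T] : S is strictly contained in the closure of T,
    i.e. there is an arrow S -> T in the quiver Q_{A_2}. *)
Definition strat_lt (S T : stratum) : bool :=
  match S, T with
  | (P1 | P2), (E1 | E2 | H1 | H2) => true
  | (E1 | E2), (H1 | H2) => true
  | _, _ => false
  end.

Definition strat_eqb (S T : stratum) : bool :=
  match S, T with
  | P1, P1 | P2, P2 | E1, E1 | E2, E2 | H1, H1 | H2, H2 => true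
  | _, _ => false
  end.

Definition strat_le (S T : stratum) : bool := strat_eqb S T || strat_lt S T.

Definition is_ideal (R : idomainType) (I : R -> Prop) : Prop :=
  [/\ I 0, (forall x y, I x -> I y -> I (x + y)) & (forall a x, I x -> I (a * x))].

Definition PID (R : idomainType) : Prop :=
  forall I : R -> Prop, @is_ideal R I ->
    exists g : R, forall x, I x <-> exists a, x = a * g.

Definition lin (R : idomainType) (U V : lmodType R) (f : U -> V) : Prop :=
  forall (a : R) (x y : U), f (a *: x + y) = a *: f x + f y.
Arguments lin {R U V} f.

(** Representations of (Q_{A_2}, rho_{A_2}) by R-modules: an R-module at each
    vertex, an R-linear map for each arrow, and every path of length 2 equals
    the direct arrow with the same endpoints (these are all the relations,
    since all paths have length <= 2). *)
Record rep (R : idomainType) := Rep {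
  rmod : stratum -> lmodType R;
  rarr : forall S T, strat_lt S T -> rmod S -> rmod T;
  rarr_lin : forall S T (h : strat_lt S T), lin (rarr S T h);
  rarr_rel : forall S T U (h1 : strat_lt S T) (h2 : strat_lt T U)
               (h3 : strat_lt S U) x, rarr T U h2 (rarr S T h1 x) = rarr S U h3 x }.
Arguments rarr {R} r {S T} h _ : rename.

Record hom (R : idomainType) (A B : rep R) := Hom {
  hcomp : forall S, rmod A S -> rmod B S;
  hcomp_lin : forall S, lin (hcomp S);
  hcomp_nat : forall S T (h : strat_lt S T) x,
      hcomp T (rarr A h x) = rarr B h (hcomp S x) }.
Arguments hcomp {R A B} h S _ : rename.

Definition hom_iso (R : idomainType) (A B : rep R) (f : hom A B) : Prop :=
  forall S, bijective (hcomp f S).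

Definition exact_at (R : idomainType) (A B C : rep R)
    (f : hom A B) (g : hom B C) : Prop :=
  forall S (y : rmod B S), hcomp g S y = 0 <-> exists x, hcomp f S x = y.

(** A q-fold (Yoneda) extension of A by B:
    0 -> Y_0 -> Y_1 -> ... -> Y_q -> Y_(q+1) -> 0 exact, with Y_0 ~= B and
    Y_(q+1) ~= A (objects Y_i for i > q+1 are irrelevant). *)
Record yext (R : idomainType) (q : nat) (A B : rep R) := YExt {
  yobj : nat -> rep R;
  ydiff : forall i, hom (yobj i) (yobj i.+1);
  yleft : hom B (yobj 0);
  yright : hom (yobj q.+1) A;
  yleft_iso : hom_iso yleft;
  yright_iso : hom_iso yright;
  ydiff_inj : forall S, injective (hcomp (ydiff 0) S);
  ydiff_exact : forall i, (i < q)%N -> exact_at (ydiff i) (ydiff i.+1);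
  ydiff_surj : forall S y, exists x, hcomp (ydiff q) S x = y }.

Definition yext_mor (R : idomainType) (q : nat) (A B : rep R)
    (E E' : yext q A B) : Prop :=
  exists phi : forall i, hom (yobj E i) (yobj E' i),
    [/\ forall i, (i <= q)%N -> forall S x,
          hcomp (phi i.+1) S (hcomp (ydiff E i) S x)
          = hcomp (ydiff E' i) S (hcomp (phi i) S x),
        forall S x, hcomp (phi 0%N) S (hcomp (yleft E) S x) = hcomp (yleft E') S x
      & forall S x, hcomp (yright E') S (hcomp (phi q.+1) S x) = hcomp (yright E) S x].

(** Yoneda Ext^q(A,B) is the set of classes of q-extensions modulo the
    equivalence relation generated by morphisms of extensions.
    Ext^q(A,B) = 0 iff there is only one class. *)
Definition Ext_zero (R : idomainType) (q : nat) (A B : rep R) : Prop :=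
  forall E E' : yext q A B, clos_refl_sym_trans (yext q A B) (@yext_mor R q A B) E E'.

(** The representation I_S: R (= 'rV_1) at every T with T in closure(S),
    0 (= 'rV_0) elsewhere; identity maps between copies of R, zero otherwise.
    The map along an arrow is right multiplication by the all-ones matrix,
    which is the identity 'rV_1 -> 'rV_1 and zero when a side is 'rV_0. *)
Definition Imod (R : idomainType) (S : stratum) (T : stratum) : lmodType R :=
  'rV[R]_(strat_le T S).

Definition Iarr (R : idomainType) (S : stratum) (T U : stratum)
    (h : strat_lt T U) (x : Imod R S T) : Imod R S U :=
  x *m const_mx 1.

Lemma Iarr_lin (R : idomainType) S T U (h : strat_lt T U) : lin (@Iarr R S T U h).
Proof. by move=> a x y; rewrite /Iarr mulmxDl scalemxAl. Qed.

Lemma const1_mul (R : idomainType) (a b c : bool) : (a && c ==> b) ->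
  (const_mx 1 : 'M[R]_(a, b)) *m (const_mx 1 : 'M[R]_(b, c)) = const_mx 1.
Proof.
move=> H; apply/matrixP => i j; rewrite !mxE.
case: b H => [_|].
  by rewrite big_ord1 !mxE mulr1.
case: a i => [|[] //]; case: c j => [|[] //] //.
Qed.

Lemma strat_mid S T U X : strat_lt S T -> strat_lt T U ->
  strat_le S X && strat_le U X ==> strat_le T X.
Proof. by case: S; case: T; case: U; case: X. Qed.

Lemma Iarr_rel (R : idomainType) S T U V (h1 : strat_lt T U) (h2 : strat_lt U V)
  (h3 : strat_lt T V) x : @Iarr R S U V h2 (@Iarr R S T U h1 x) = @Iarr R S T V h3 x.
Proof. by rewrite /Iarr -mulmxA const1_mul // strat_mid. Qed.

Definition Irep (R : idomainType) (S : stratum) : rep R :=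
  @Rep R (Imod R S) (@Iarr R S) (@Iarr_lin R S) (@Iarr_rel R S).

(* Main.v *)
Require Import Defs.
From HB Require Import structures.
From mathcomp Require Import all_boot all_order all_algebra.
From Stdlib Require Import Relations IndefiniteDescription.
Require Import Defs.
Import GRing.Theory.
Local Open Scope ring_scope.
Set Implicit Arguments. Unset Strict Implicit. Unset Printing Implicit Defensive.

Section Basics.
Variable R : idomainType.

Lemma lin0 (U V : lmodType R) (f : U -> V) : lin f -> f 0 = 0.
Proof.
move=> h; apply: (addrI (f 0)); rewrite addr0.
by rewrite -{1}(scale1r (f 0)) -h scale1r addr0.
Qed.

Lemma linD (U V : lmodType R) (f : U -> V) : lin f -> forall x y, f (x + y) = f x + f y.
Proof. by move=> h x y; have := h 1 x y; rewrite !scale1r. Qed.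

Lemma linZ (U V : lmodType R) (f : U -> V) : lin f -> forall a x, f (a *: x) = a *: f x.
Proof. by move=> h a x; have := h a x 0; rewrite !addr0 (lin0 h) addr0. Qed.

Lemma linN (U V : lmodType R) (f : U -> V) : lin f -> forall x, f (- x) = - f x.
Proof. by move=> h x; rewrite -scaleN1r (linZ h) scaleN1r. Qed.

Lemma linB (U V : lmodType R) (f : U -> V) : lin f -> forall x y, f (x - y) = f x - f y.
Proof. by move=> h x y; rewrite (linD h) (linN h). Qed.

Lemma hom0 (M N : rep R) (f : hom M N) X : hcomp f X 0 = 0.
Proof. exact: lin0 (hcomp_lin f X). Qed.

Lemma mulC1 (b : bool) (x : 'rV[R]_b) : x *m const_mx 1 = x.
Proof.
case: b x => x; apply/matrixP => i j; rewrite !mxE.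
  by rewrite big_ord1 mxE mulr1 (ord1 j).
by case: j.
Qed.

Lemma rv_triv (c : bool) (x y : 'rV[R]_c) : c = false -> x = y.
Proof. by move=> hc; move: x y; rewrite hc => x y; apply/matrixP => i []. Qed.

Lemma mx_exact (c0 c1 c2 : bool) (w : 'rV[R]_c1) : (c1 -> c2 = ~~ c0) ->
  (w *m (const_mx 1 : 'M_(c1, c2)) = 0 <-> exists u : 'rV[R]_c0, u *m const_mx 1 = w).
Proof.
case: c1 w => w h.
  move: (h isT) => {h} ->; case: c0.
    split=> _; [by exists w; rewrite mulC1 | exact: rv_triv].
  rewrite mulC1; split=> [->|[u <-]]; first by exists 0; rewrite mul0mx.
  by rewrite (rv_triv u 0) // mul0mx.
split=> _; last by rewrite (rv_triv w 0) // mul0mx.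
by exists 0; rewrite mul0mx; exact: rv_triv.
Qed.

Definition gv (N : lmodType R) (c : bool) (F : {ffun 'I_c -> N}) : N := \sum_(j < c) F j.
Definition mk (N : lmodType R) (c : bool) (v : N) : {ffun 'I_c -> N} := [ffun _ => v].

Lemma gv_mk (N : lmodType R) (c : bool) (v : N) : gv (mk c v) = if c then v else 0.
Proof. by case: c; rewrite /gv ?big_ord1 ?big_ord0 ?ffunE. Qed.

Lemma gv_triv (N : lmodType R) (c : bool) (F : {ffun 'I_c -> N}) : c = false -> gv F = 0.
Proof. by move=> hc; move: F; rewrite hc => F; rewrite /gv big_ord0. Qed.

Lemma eq_gv (N : lmodType R) (c : bool) (F F' : {ffun 'I_c -> N}) :
  (c -> gv F = gv F') -> F = F'.
Proof.
case: c F F' => F F' h; apply/ffunP => j.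
  by move: (h isT); rewrite /gv !big_ord1 (ord1 j).
by case: j.
Qed.

Lemma gv_lin (N : lmodType R) (c : bool) : lin (@gv N c).
Proof.
move=> a F F'; case: c F F' => F F'; rewrite /gv ?big_ord1 ?big_ord0 ?ffunE //.
by rewrite scaler0 addr0.
Qed.

Lemma gv0 (N : lmodType R) (c : bool) : gv (0 : {ffun 'I_c -> N}) = 0.
Proof. exact: lin0 (@gv_lin N c). Qed.

Lemma mk_lin (N : lmodType R) (c : bool) : lin (@mk N c).
Proof. by move=> a x y; apply/ffunP => j; rewrite !ffunE. Qed.

End Basics.

Lemma strat_le_down X Z Y : strat_lt X Z -> strat_le Z Y -> strat_le X Y.
Proof. by case: X; case: Z; case: Y. Qed.

Lemma strat_le_refl X : strat_le X X.
Proof. by case: X. Qed.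

Definition toT (R : idomainType) (M : rep R) (X Y : stratum) : rmod M X -> rmod M Y.
Proof.
case: X; case: Y; first [exact id | (refine (rarr M _); exact (erefl true)) | exact (fun _ => 0)].
Defined.
Arguments toT {R} M X Y _.

Section ToT.
Variable R : idomainType.

Lemma rarr_irr (M : rep R) X Z (h h' : strat_lt X Z) x : rarr M h x = rarr M h' x.
Proof. by rewrite (bool_irrelevance h h'). Qed.

Lemma toT_id (M : rep R) Y x : toT M Y Y x = x.
Proof. by case: Y x. Qed.

Lemma toT_arr (M : rep R) X Z Y (h : strat_lt X Z) x : strat_le Z Y ->
  toT M Z Y (rarr M h x) = toT M X Y x.
Proof.
case: X Z Y h x => [] [] [] //= h x // _;
  first [ exact: rarr_irr | exact: rarr_rel | done ].
Qed.

Lemma toT_lin (M : rep R) X Y : lin (toT M X Y).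
Proof.
case: X; case: Y => //=; try exact: rarr_lin;
  by move=> a x y; rewrite ?scaler0 ?addr0.
Qed.

Lemma toT_nat (M N : rep R) (f : hom M N) X Y x :
  hcomp f Y (toT M X Y x) = toT N X Y (hcomp f X x).
Proof.
case: X Y x => [] [] x //=; first [exact: hcomp_nat | exact: hom0].
Qed.

Lemma toTB_bij T X : strat_le X T -> bijective (toT (Irep R T) X T).
Proof.
case: X; case: T => //= _; exists id => x //=; by rewrite /Iarr mulC1.
Qed.

End ToT.
Set Implicit Arguments. Unset Strict Implicit. Unset Printing Implicit Defensive.

Section Mix.
Variable R : idomainType.
Variables S T : stratum.
Local Notation A := (Irep R S).
Local Notation B := (Irep R T).

Lemma gv_mkT (N : lmodType R) (c : bool) (v : N) : c -> gv (mk c v) = v.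
Proof. by move=> hc; rewrite gv_mk hc. Qed.

Lemma if_zero (V : zmodType) (c : bool) (x : V) : (~~ c -> x = 0) -> (if c then x else 0) = x.
Proof. by case: c => // ->. Qed.

Definition Gm (b : bool) (N : lmodType R) (X : stratum) : lmodType R :=
  {ffun 'I_(b && strat_le X T) -> N}.
Definition Mixmod (b : bool) (N : lmodType R) (a : bool) (X : stratum) : lmodType R :=
  (Gm b N X * 'rV[R]_(a && strat_le X S))%type.
Definition Mixarr b N a X Z (h : strat_lt X Z) (p : Mixmod b N a X) : Mixmod b N a Z :=
  (mk _ (gv p.1), p.2 *m const_mx 1).

Lemma Mixarr_lin b N a X Z (h : strat_lt X Z) : lin (@Mixarr b N a X Z h).
Proof.
move=> c p p'; apply: injective_projections => /=.
  by rewrite (gv_lin c p.1 p'.1) (mk_lin _ c).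
by rewrite mulmxDl scalemxAl.
Qed.

Lemma bool_down (a : bool) X Y W U : strat_lt X Y -> strat_lt Y W ->
  (a && strat_le X U) && (a && strat_le W U) ==> (a && strat_le Y U).
Proof.
move=> h1 h2; case: a => //=; apply/implyP => /andP[_ hW].
exact: strat_le_down h2 hW.
Qed.

Lemma Mixarr_rel b N a X Y W (h1 : strat_lt X Y) (h2 : strat_lt Y W) (h3 : strat_lt X W) p :
  @Mixarr b N a Y W h2 (@Mixarr b N a X Y h1 p) = @Mixarr b N a X W h3 p.
Proof.
apply: injective_projections => /=.
  apply: eq_gv => H; rewrite !gv_mk H.
  have -> // : b && strat_le Y T.
  by move: H => /andP[-> hW] /=; exact: strat_le_down h2 hW.
by rewrite -mulmxA const1_mul // bool_down.
Qed.

Definition Mix b N a : rep R := @Rep R (Mixmod b N a) (@Mixarr b N a)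
  (@Mixarr_lin b N a) (@Mixarr_rel b N a).

Definition Amod (a : bool) (X : stratum) : lmodType R := 'rV[R]_(a && strat_le X S).
Definition Aarr a X Z (h : strat_lt X Z) (v : Amod a X) : Amod a Z := v *m const_mx 1.
Lemma Aarr_lin a X Z (h : strat_lt X Z) : lin (@Aarr a X Z h).
Proof. by move=> c x y; rewrite /Aarr mulmxDl scalemxAl. Qed.
Lemma Aarr_rel a X Y W (h1 : strat_lt X Y) (h2 : strat_lt Y W) (h3 : strat_lt X W) v :
  @Aarr a Y W h2 (@Aarr a X Y h1 v) = @Aarr a X W h3 v.
Proof. by rewrite /Aarr -mulmxA const1_mul // bool_down. Qed.
Definition Am a : rep R := @Rep R (Amod a) (@Aarr a) (@Aarr_lin a) (@Aarr_rel a).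

Definition zhom (M N : rep R) : hom M N.
Proof.
apply: (@Hom R M N (fun X _ => 0)).
  by move=> X c x y; rewrite scaler0 addr0.
by move=> X Z h x; rewrite (lin0 (rarr_lin N _ _ h)).
Defined.

Section HomIn.
Variables (M : rep R) (b : bool) (N : lmodType R) (a : bool).
Variables (m : rmod M T -> N) (hm : lin m) (ap : hom M (Am a)).

Definition homIn_f X (x : rmod M X) : Mixmod b N a X :=
  (mk _ (m (toT M X T x)), hcomp ap X x).

Lemma homIn_lin X : lin (@homIn_f X).
Proof.
move=> c x y; apply: injective_projections => /=.
  by rewrite (@toT_lin _ M X T) hm (mk_lin _ c).
by rewrite (hcomp_lin ap X).
Qed.

Lemma homIn_nat X Z (h : strat_lt X Z) x :
  homIn_f (rarr M h x) = rarr (Mix b N a) h (homIn_f x).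
Proof.
apply: injective_projections => /=.
  apply: eq_gv => H; rewrite !gv_mk H.
  move: H => /andP[-> hZ] /=; rewrite (strat_le_down h hZ).
  by rewrite toT_arr.
by rewrite /= (hcomp_nat ap).
Qed.

Definition homIn : hom M (Mix b N a) := @Hom R M (Mix b N a) homIn_f homIn_lin homIn_nat.
End HomIn.

Section HomMix.
Variables (b b' : bool) (N N' : lmodType R) (a a' : bool).
Variables (h : N -> N') (hh : lin h).

Definition homMix_f X (p : Mixmod b N a X) : Mixmod b' N' a' X :=
  (mk _ (h (gv p.1)), p.2 *m const_mx 1).

Lemma homMix_lin X : lin (@homMix_f X).
Proof.
move=> c x y; apply: injective_projections => /=.
  by rewrite (gv_lin c x.1 y.1) hh (mk_lin _ c).
by rewrite mulmxDl scalemxAl.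
Qed.

Lemma homMix_nat X Z (hXZ : strat_lt X Z) p :
  homMix_f (rarr (Mix b N a) hXZ p) = rarr (Mix b' N' a') hXZ (homMix_f p).
Proof.
apply: injective_projections => /=.
  apply: eq_gv => H; rewrite !gv_mk.
  move: H => /andP[hb' hZ].
  have hX := strat_le_down hXZ hZ.
  rewrite (_ : b' && strat_le Z T = true); last by rewrite hb' hZ.
  rewrite (_ : b' && strat_le X T = true); last by rewrite hb' hX.
  rewrite hZ andbT if_zero // => hb.
  by apply: gv_triv; rewrite (negbTE hb).
rewrite -!mulmxA !const1_mul //.
  by case: a'; case: a => //=; apply/implyP => /andP[].
by case: a'; case: a => //=; apply/implyP => /andP[].
Qed.

Definition homMix : hom (Mix b N a) (Mix b' N' a') :=
  @Hom R (Mix b N a) (Mix b' N' a') homMix_f homMix_lin homMix_nat.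

Lemma homMix_inj : (b -> b') -> injective h -> (a -> a') ->
  forall X, injective (hcomp homMix X).
Proof.
move=> hbb hinj haa X p p' /= E.
have E1 := f_equal fst E; have E2 := f_equal snd E; move: E1 E2 => /= E1 E2.
apply: injective_projections.
  apply: eq_gv => H; apply: hinj.
  have := congr1 (fun F => gv F) E1; rewrite /= !gv_mk.
  move: H => /andP[hb hle].
  by rewrite (_ : b' && strat_le X T = true) // hbb.
have sq : forall v : 'rV[R]_(a && strat_le X S),
    v = (v *m (const_mx 1 : 'M_(_, a' && strat_le X S))) *m const_mx 1.
  move=> v; rewrite -mulmxA const1_mul ?mulC1 //.
  by case: a haa => //= ->; case: (strat_le X S).
by rewrite (sq p.2) (sq p'.2) E2.
Qed.

Lemma homMix_surj : (b' -> b) -> (b' -> forall y, exists x, h x = y) -> (a' -> a) ->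
  forall X y, exists x, hcomp homMix X x = y.
Proof.
move=> hbb hsurj haa X [F v].
have [x hx] : exists x, b' -> h x = gv F.
  have [hb'|hb'] : b' \/ ~~ b' by case: b'; [left|right].
  2: by exists 0 => H; rewrite H in hb'.
  by have [x hx] := hsurj hb' (gv F); exists x.
exists (mk _ x, v *m const_mx 1); apply: injective_projections => /=.
  apply: eq_gv => H; move: (H) => /andP[hb' hle].
  have hc : b && strat_le X T by rewrite hle hbb.
  by rewrite gv_mkT // gv_mkT // hx.
rewrite -mulmxA const1_mul ?mulC1 //.
by case: a' haa => //= ->; case: (strat_le X S).
Qed.
End HomMix.

Lemma pair_eq0 (U V : lmodType R) (p : (U * V)%type) : p = 0 <-> p.1 = 0 /\ p.2 = 0.
Proof.
split=> [-> //|[h1 h2]]; apply: injective_projections => //.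
Qed.

Lemma homMix_exact (b0 b1 b2 : bool) (N0 N1 N2 : lmodType R) (a0 a1 a2 : bool)
  (h0 : N0 -> N1) (hh0 : lin h0) (h1 : N1 -> N2) (hh1 : lin h1) :
  (b1 -> forall v, (b2 -> h1 v = 0) <-> (exists u, b0 /\ h0 u = v)) ->
  (a1 -> a2 = ~~ a0) ->
  exact_at (homMix b0 b1 a0 a1 hh0) (homMix b1 b2 a1 a2 hh1).
Proof.
move=> Hg Ha X [F w] /=; rewrite pair_eq0 /=.
have Ha' : a1 && strat_le X S -> a2 && strat_le X S = ~~ (a0 && strat_le X S).
  by move=> /andP[ha1 hle]; rewrite (Ha ha1) hle !andbT.
split.
  move=> [EG EA].
  have [u' hu'] := (mx_exact w Ha').1 EA.
  have [u hu] : exists u : Gm b0 N0 X, mk _ (h0 (gv u)) = F.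
    have [hc|hc] : (b1 && strat_le X T) \/ ~~ (b1 && strat_le X T).
      by case: (b1 && strat_le X T); [left|right].
    2: by exists 0; apply: eq_gv => H; rewrite H in hc.
    move: (hc) => /andP[hb1 hle].
    have : b2 -> h1 (gv F) = 0.
      move=> hb2; have := congr1 (fun F => gv F) EG.
      by rewrite /= gv_mkT ?gv0 // hb2 hle.
    move/(Hg hb1 (gv F)) => [u [hb0 hu]].
    exists (mk _ u); apply: eq_gv => H; rewrite gv_mkT // gv_mkT ?hu //.
    by rewrite hb0 hle.
  by exists (u, u'); apply: injective_projections => /=.
move=> [[u u'] /= E].
have E1 := f_equal fst E; have E2 := f_equal snd E; move: E1 E2 => /= E1 E2.
split; last by apply/(mx_exact w Ha'); exists u'.
apply: eq_gv => H; rewrite gv_mkT // gv0.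
move: H => /andP[hb2 hle].
rewrite -E1 gv_mk (_ : b1 && strat_le X T = b1); last by rewrite hle andbT.
case: ifP => hb1; last by rewrite (lin0 hh1).
have [hb0|hb0] := orP (orbN b0).
  by apply/(Hg hb1 _).2; [exists (gv u) | ].
rewrite (gv_triv u); last by rewrite (negbTE hb0).
by rewrite (lin0 hh0) (lin0 hh1).
Qed.

Section HomOut.
Variables (b : bool) (N : lmodType R) (a : bool).
Definition homOut_f X (p : Mixmod b N a X) : rmod A X := p.2 *m const_mx 1.
Lemma homOut_lin X : lin (@homOut_f X).
Proof. by move=> c x y; rewrite /homOut_f /= mulmxDl scalemxAl. Qed.
Lemma homOut_nat X Z (h : strat_lt X Z) p :
  homOut_f (rarr (Mix b N a) h p) = rarr A h (homOut_f p).
Proof.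
rewrite /homOut_f /= /Iarr -!mulmxA !const1_mul //.
  by case: a => //=; apply/implyP => /andP[].
by case: a => //=; apply/implyP => /andP[].
Qed.
Definition homOut : hom (Mix b N a) A := @Hom R (Mix b N a) A homOut_f homOut_lin homOut_nat.

Lemma homOut_iso : b = false -> a = true -> hom_iso homOut.
Proof.
move=> hb ha X.
exists (fun v : 'rV[R]_(strat_le X S) => ((0 : Gm b N X), v *m const_mx 1)).
  move=> [F v] /=; rewrite /homOut_f /=; apply: injective_projections => /=.
    by apply: eq_gv => H; exfalso; move: H; rewrite hb.
  by rewrite -mulmxA const1_mul ?mulC1 // ha /=; case: (strat_le X S).
move=> v /=; rewrite /homOut_f /= -mulmxA const1_mul ?mulC1 // ha /=.
by case: (strat_le X S).
Qed.
End HomOut.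

Lemma homIn_iso (b : bool) (N : lmodType R) (a : bool) (m : rmod B T -> N) (hm : lin m)
  (ap : hom B (Am a)) : b = true -> a = false -> bijective m ->
  hom_iso (homIn b hm ap).
Proof.
move=> hb ha [mi mK miK] X.
case hle: (strat_le X T).
  have [ti tK tiK] := toTB_bij R hle.
  exists (fun p : Mixmod b N a X => ti (mi (gv p.1))).
    move=> x /=; rewrite /homIn_f /= gv_mkT ?hb ?hle //.
    by rewrite mK tK.
  move=> [F v] /=; rewrite /homIn_f /=; apply: injective_projections => /=.
    apply: eq_gv => H; rewrite gv_mkT //.
    by rewrite tiK miK.
  by apply: rv_triv; rewrite ha.
exists (fun _ => 0).
  by move=> x /=; apply: rv_triv.
move=> [F v] /=; rewrite /homIn_f /=; apply: injective_projections => /=.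
  by apply: eq_gv => H; exfalso; move: H; rewrite hle andbF.
by apply: rv_triv; rewrite ha.
Qed.

End Mix.
Unset Implicit Arguments. Unset Printing Implicit Defensive.

Lemma id_lin (R : idomainType) (U : lmodType R) : lin (@id U).
Proof. by []. Qed.

Lemma if_T (V : zmodType) (c : bool) (v : V) : c -> (if c then v else 0) = v.
Proof. by move=> ->. Qed.

Section E0.
Variables (R : idomainType) (S T : stratum) (q : nat) (hq : (0 < q)%N).
Local Notation A := (Irep R S).
Local Notation B := (Irep R T).

Definition BT : lmodType R := rmod B T.
Definition b0 (i : nat) : bool := (i <= 1)%N.
Definition aa (i : nat) : bool := (q <= i)%N && (i <= q.+1)%N.
Definition obj0 i : rep R := @Mix R S T (b0 i) BT (aa i).
Definition d0 i : hom (obj0 i) (obj0 i.+1) :=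
  @homMix R S T (b0 i) (b0 i.+1) BT BT (aa i) (aa i.+1) id (@id_lin R BT).
Definition yl0 : hom B (obj0 0) :=
  @homIn R S T B (b0 0) BT (aa 0) id (@id_lin R BT) (zhom _ _).
Definition yr0 : hom (obj0 q.+1) A := @homOut R S T (b0 q.+1) BT (aa q.+1).

Lemma aa0 : aa 0 = false.
Proof. by rewrite /aa leqNgt hq. Qed.
Lemma aaq : aa q = true.
Proof. by rewrite /aa leqnn leqnSn. Qed.
Lemma aaq1 : aa q.+1 = true.
Proof. by rewrite /aa leqnSn leqnn. Qed.

Lemma aa_exact i : (i < q)%N -> aa i.+1 -> aa i.+2 = ~~ aa i.
Proof.
move=> hi /andP[h1 _].
have ei : i.+1 = q by apply/eqP; rewrite eqn_leq hi h1.
by rewrite /aa -ei leqnSn leqnn ltnn.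
Qed.

Lemma yl0_iso : hom_iso yl0.
Proof. by apply: homIn_iso => //; [exact: aa0 | exists id]. Qed.

Lemma yr0_iso : hom_iso yr0.
Proof. by apply: homOut_iso; [rewrite /b0 ltnS leqNgt hq | exact: aaq1]. Qed.

Lemma inj0 X : injective (hcomp (d0 0) X).
Proof. by apply: homMix_inj => //; rewrite aa0. Qed.

Lemma exact0 i : (i < q)%N -> exact_at (d0 i) (d0 i.+1).
Proof.
move=> hi; apply: homMix_exact; last exact: aa_exact.
rewrite /b0 => hb v; case: i hi hb => [|i] //= hi hb.
by split=> _; [exists v | ].
Qed.

Lemma surj0 X y : exists x, hcomp (d0 q) X x = y.
Proof.
apply: homMix_surj => //; first by rewrite /b0 ltnS leqNgt hq.
  by rewrite /b0 ltnS leqNgt hq.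
by rewrite aaq.
Qed.

Definition E0 : yext q A B :=
  @YExt R q A B obj0 d0 yl0 yr0 yl0_iso yr0_iso inj0 exact0 surj0.

Section WithE.
Variable E : yext q A B.
Local Notation Y i := (yobj E i).

Definition yri (j : nat) X : rmod (Y j) X -> rmod A X :=
  match PeanoNat.Nat.eq_dec j q.+1 with
  | left e => fun y => hcomp (yright E) X
      (match e in _ = k return rmod (yobj E k) X with erefl => y end)
  | right _ => fun _ => 0
  end.

Lemma yri_q1 X y : yri q.+1 X y = hcomp (yright E) X y.
Proof.
rewrite /yri; case: (PeanoNat.Nat.eq_dec q.+1 q.+1) => [e|//].
by rewrite (eq_irrelevance e erefl).
Qed.

Lemma yri_ne j X y : j <> q.+1 -> yri j X y = 0.
Proof. by rewrite /yri; case: (PeanoNat.Nat.eq_dec j q.+1). Qed.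

Lemma yri_lin j X : lin (yri j X).
Proof.
rewrite /yri; case: (PeanoNat.Nat.eq_dec j q.+1) => [e|_].
  by subst j; exact: hcomp_lin.
by move=> c x y; rewrite scaler0 addr0.
Qed.

Lemma yri_nat j X Z (h : strat_lt X Z) y :
  yri j Z (rarr (Y j) h y) = yri j X y *m const_mx 1.
Proof.
rewrite /yri; case: (PeanoNat.Nat.eq_dec j q.+1) => [e|_]; last by rewrite mul0mx.
by subst j; rewrite /= (hcomp_nat (yright E)).
Qed.

Lemma dd i X y : (i < q)%N -> hcomp (ydiff E i.+1) X (hcomp (ydiff E i) X y) = 0.
Proof. by move=> hi; apply/(ydiff_exact E i hi X _).2; exists y. Qed.

Definition AP_f i X (y : rmod (Y i) X) : rmod (Am R S (aa i)) X :=
  (yri i.+1 X (hcomp (ydiff E i) X y) + yri i X y) *m const_mx 1.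

Lemma AP_lin i X : lin (@AP_f i X).
Proof.
move=> c x y; rewrite /AP_f (hcomp_lin (ydiff E i) X) !(yri_lin _ _).
by rewrite addrACA -scalerDr mulmxDl scalemxAl.
Qed.

Lemma AP_nat i X Z (h : strat_lt X Z) y :
  @AP_f i Z (rarr (Y i) h y) = rarr (Am R S (aa i)) h (@AP_f i X y).
Proof.
rewrite /AP_f /= /Aarr (hcomp_nat (ydiff E i)) !yri_nat -mulmxDl -!mulmxA !const1_mul //.
  by apply/implyP => /and3P[-> ->].
by apply/implyP => /and3P[_ _ ->].
Qed.

Definition AP i : hom (Y i) (Am R S (aa i)) := @Hom R _ _ (@AP_f i) (@AP_lin i) (@AP_nat i).

Lemma AP_comm i X y : (i <= q)%N ->
  hcomp (AP i.+1) X (hcomp (ydiff E i) X y) = hcomp (AP i) X y *m const_mx 1.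
Proof.
move=> hi /=; rewrite /AP_f.
have hi1 : i <> q.+1 by move=> e; rewrite e ltnn in hi.
rewrite (yri_ne i X y hi1) addr0.
case: (eqVneq i q) => [ei|ne].
  subst i; rewrite (yri_ne q.+2 X _ (fun e => n_Sn _ (esym e))) add0r.
  rewrite -mulmxA const1_mul // aaq aaq1.
  by case: (strat_le X S).
have hi' : (i < q)%N by rewrite ltn_neqAle ne hi.
rewrite (dd _ _ _ hi') (lin0 (yri_lin _ _)) add0r.
rewrite (yri_ne i.+1 X); last by move=> [e]; rewrite e eqxx in ne.
by rewrite !mul0mx.
Qed.

Lemma AP_right X y : hcomp (AP q.+1) X y *m const_mx 1 = hcomp (yright E) X y.
Proof.
rewrite /= /AP_f (yri_ne q.+2 X _ (fun e => n_Sn _ (esym e))) add0r yri_q1.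
rewrite -mulmxA const1_mul ?mulC1 //.
by rewrite aaq1; case: (strat_le X S).
Qed.

Lemma AP_left X y : hcomp (AP 0) X y = 0.
Proof. by apply: rv_triv; rewrite aa0. Qed.


Section Phi1.
Variable r : forall i, rmod (Y i) T -> BT.
Hypothesis rlin : forall i, lin (r i).
Hypothesis r0 : forall b, r 0 (hcomp (yleft E) T b) = b.
Hypothesis r1 : forall y, r 1 (hcomp (ydiff E 0) T y) = r 0 y.

Definition phi1 i : hom (Y i) (obj0 i) :=
  @homIn R S T (Y i) (b0 i) BT (aa i) (r i) (rlin i) (AP i).

Lemma phi1_mor : yext_mor E E0.
Proof.
exists phi1; split.
- move=> i hi X x /=; rewrite /homIn_f /homMix_f /=.
  apply: injective_projections => /=; last exact: AP_comm.
  apply: eq_gv => H; move: (H) => /andP[hb hle].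
  case: i x hi H hb => [|i] x hi H hb //.
  rewrite !gv_mkT ?H ?hle //.
  by rewrite -(toT_nat (ydiff E 0)) r1.
- move=> X x /=; rewrite /homIn_f /=; apply: injective_projections => /=.
    by rewrite -(toT_nat (yleft E)) r0.
  exact: AP_left.
- by move=> X x /=; rewrite /homOut_f /=; exact: AP_right.
Qed.
End Phi1.

Section Phi2.
Hypothesis hq2 : (1 < q)%N.
Variable sig : forall i, rmod (Y i.+2) T -> rmod (Y i.+1) T.
Hypothesis siglin : forall i, lin (sig i).
Hypothesis sigsec : forall i, (i.+1 == q) ->
  forall w, hcomp (ydiff E i.+1) T (sig i w) = w.

Definition N3 i : lmodType R :=
  (rmod (Y i) T * {ffun 'I_(i.+1 == q) -> rmod (Y i.+2) T})%type.
Definition g3 i (p : N3 i) : N3 i.+1 := (hcomp (ydiff E i) T p.1 + sig i (gv p.2), 0).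
Lemma g3_lin i : lin (g3 i).
Proof.
move=> c x y; apply: injective_projections => /=; last by rewrite scaler0 addr0.
rewrite (hcomp_lin (ydiff E i) T) (gv_lin c x.2 y.2) (siglin i).
by rewrite addrACA -scalerDr.
Qed.

Definition b3 (i : nat) : bool := (i <= q)%N.
Definition obj3 i : rep R := @Mix R S T (b3 i) (N3 i) (aa i).
Definition d3 i : hom (obj3 i) (obj3 i.+1) :=
  @homMix R S T (b3 i) (b3 i.+1) (N3 i) (N3 i.+1) (aa i) (aa i.+1) (g3 i) (g3_lin i).
Definition m3 (b : BT) : N3 0 := (hcomp (yleft E) T b, 0).
Lemma m3_lin : lin m3.
Proof.
move=> c x y; apply: injective_projections => /=; last by rewrite scaler0 addr0.
exact: hcomp_lin.
Qed.
Definition yl3 : hom B (obj3 0) := @homIn R S T B (b3 0) (N3 0) (aa 0) m3 m3_lin (zhom _ _).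
Definition yr3 : hom (obj3 q.+1) A := @homOut R S T (b3 q.+1) (N3 q.+1) (aa q.+1).

Lemma q1F : (1 == q) = false.
Proof. by apply/negbTE; rewrite neq_ltn hq2. Qed.

Lemma yl3_iso : hom_iso yl3.
Proof.
apply: homIn_iso => //; first exact: aa0.
have [g gK Kg] := yleft_iso E T.
exists (fun p : N3 0 => g p.1).
  by move=> b; rewrite /m3 /= gK.
move=> [y w]; rewrite /m3 /= Kg; apply: injective_projections => //=.
by apply: eq_gv => H; exfalso; move: H; rewrite q1F.
Qed.

Lemma yr3_iso : hom_iso yr3.
Proof. by apply: homOut_iso; [rewrite /b3 ltnn | exact: aaq1]. Qed.

Lemma inj3 X : injective (hcomp (d3 0) X).
Proof.
apply: homMix_inj; [by rewrite /b3 ltnW | | by rewrite aa0].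
move=> [y w] [y' w'] /= E1.
have E2 := f_equal fst E1; move: E2 => /=.
have ew : forall w0 : {ffun 'I_(1 == q) -> rmod (Y 2) T}, gv w0 = 0.
  by move=> w0; apply: gv_triv; exact: q1F.
rewrite !ew !(lin0 (siglin 0)) !addr0 => /(ydiff_inj E T) ->.
congr pair; apply: eq_gv => _; by rewrite !ew.
Qed.

Lemma pairE0 (U V : lmodType R) (p : (U * V)%type) : p = 0 <-> p.1 = 0 /\ p.2 = 0.
Proof. by split=> [-> //|[h1 h2]]; apply: injective_projections. Qed.

Lemma exact3 i : (i < q)%N -> exact_at (d3 i) (d3 i.+1).
Proof.
move=> hi; apply: homMix_exact; last exact: aa_exact.
move=> hb [y w]; rewrite /b3.
have [hq'|hq'] := leqP i.+2 q.
  split.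
    move=> /(_ isT) /pairE0 [/= H1 _].
    have gw : gv w = 0.
      case: (orP (orbN (i.+2 == q))) => [e|ne].
        have := congr1 (hcomp (ydiff E i.+2) T) H1.
        rewrite (linD (hcomp_lin (ydiff E i.+2) T)) sigsec //.
        rewrite dd ?(eqP e) // add0r => ->; exact: hom0.
      by apply: gv_triv; exact/negbTE.
    move: H1; rewrite gw (lin0 (siglin _)) addr0 => H1.
    have [x hx] := (ydiff_exact E i hi T y).1 H1.
    exists (x, 0); split; first exact: ltnW.
    rewrite /g3 /= gv0 (lin0 (siglin _)) addr0 hx.
    by congr pair; apply: eq_gv => _; rewrite gw gv0.
  move=> [[x w0] [_ <-]] _; rewrite /g3 /=.
  have -> : gv w0 = 0 by apply: gv_triv; apply/negbTE; rewrite neq_ltn ltnS hq'.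
  rewrite (lin0 (siglin _)) addr0 dd // gv0 (lin0 (siglin _)) addr0.
  by apply/pairE0.
have ei : i.+1 = q by apply/eqP; rewrite eqn_leq hi -ltnS hq'.
split=> _; last by [].
set t := hcomp (ydiff E i.+1) T y.
have eq1 : i.+1 == q by rewrite ei.
have : hcomp (ydiff E i.+1) T (y - sig i t) = 0.
  by rewrite (linB (hcomp_lin (ydiff E i.+1) T)) sigsec // subrr.
move=> /(ydiff_exact E i hi T _).1 [x hx].
exists (x, mk _ t); split; first exact: ltnW.
rewrite /g3 /= gv_mkT // hx subrK; congr pair.
by apply: eq_gv => H; exfalso; move: H; rewrite -ei eqn_leq ltnn.
Qed.

Lemma surj3 X y : exists x, hcomp (d3 q) X x = y.
Proof. by apply: homMix_surj => //; [rewrite /b3 ltnn | rewrite /b3 ltnn | rewrite aaq]. Qed.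

Definition E3 : yext q A B :=
  @YExt R q A B obj3 d3 yl3 yr3 yl3_iso yr3_iso inj3 exact3 surj3.

Definition inj3_m i (y : rmod (Y i) T) : N3 i := (y, 0).
Lemma inj3_lin i : lin (inj3_m i).
Proof.
move=> c x y; apply: injective_projections => //=.
by rewrite scaler0 addr0.
Qed.

Definition phi3 i : hom (Y i) (obj3 i) :=
  @homIn R S T (Y i) (b3 i) (N3 i) (aa i) (inj3_m i) (inj3_lin i) (AP i).

Lemma phi3_mor : yext_mor E E3.
Proof.
exists phi3; split.
- move=> i hi X x /=; rewrite /homIn_f /homMix_f /=.
  apply: injective_projections => /=; last exact: AP_comm.
  apply: eq_gv => H; move: (H) => /andP[hb hle].
  have hb' : b3 i && strat_le X T by rewrite hle /b3 ltnW.
  rewrite !gv_mkT // /g3 /inj3_m /= gv0 (lin0 (siglin _)) addr0.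
  by rewrite (toT_nat (ydiff E i)).
- move=> X x /=; rewrite /homIn_f /=; apply: injective_projections => /=.
    by rewrite /inj3_m /m3 (toT_nat (yleft E)).
  exact: AP_left.
- by move=> X x /=; rewrite /homOut_f /=; exact: AP_right.
Qed.

Fixpoint hh (i : nat) : BT -> rmod (Y i) T :=
  match i as n return BT -> rmod (Y n) T with
  | 0 => hcomp (yleft E) T
  | i'.+1 => fun b => hcomp (ydiff E i') T (hh i' b)
  end.

Lemma hh_lin i : lin (hh i).
Proof.
elim: i => [|i IH] c x y /=; first exact: hcomp_lin.
by rewrite IH (hcomp_lin (ydiff E i) T).
Qed.

Lemma hh_ge2 i b : (2 <= i)%N -> hh i b = 0.
Proof.
elim: i => [|i IH] // hi /=.
have [h2|h2] := leqP 2 i; first by rewrite IH // hom0.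
case: i IH hi h2 => [|[|i]] //= IH hi h2.
by rewrite dd.
Qed.

Definition psi_m i (b : BT) : N3 i := (hh i b, 0).
Lemma psi_lin i : lin (psi_m i).
Proof.
move=> c x y; apply: injective_projections => /=; last by rewrite scaler0 addr0.
exact: hh_lin.
Qed.

Definition psi i : hom (obj0 i) (obj3 i) :=
  @homMix R S T (b0 i) (b3 i) BT (N3 i) (aa i) (aa i) (psi_m i) (psi_lin i).

Lemma psi_mor : yext_mor E0 E3.
Proof.
exists psi; split.
- move=> i hi X x /=; rewrite /homMix_f /=.
  apply: injective_projections => /=; last first.
    rewrite -!mulmxA !const1_mul //.
      by apply/implyP => /andP[].
    by apply/implyP => /and3P[_ -> ->].
  apply: eq_gv => H; move: (H) => /andP[hb hle].
  have hb' : b3 i && strat_le X T by rewrite hle /b3 ltnW.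
  rewrite [gv (mk (b0 _ && _) _)]gv_mk !gv_mkT // /g3 /psi_m /= gv0 (lin0 (siglin _)) addr0.
  case: i x hi H hb hb' => [|i] x hi H hb hb'.
    by rewrite if_T.
  have h2 := hh_ge2 i.+2; rewrite /= in h2.
  by rewrite !h2.
- move=> X x /=; rewrite /homIn_f /homMix_f /=; apply: injective_projections => /=.
    by apply: eq_gv => H; rewrite !gv_mkT //.
  by rewrite mul0mx.
- move=> X x /=; rewrite /homOut_f /homMix_f /= -mulmxA const1_mul //.
  by apply/implyP => /andP[].
Qed.
End Phi2.

End WithE.
End E0.
Unset Implicit Arguments. Unset Printing Implicit Defensive.

Section Exist.
Variable R : idomainType.

Lemma lin_inv (U V : lmodType R) (f : U -> V) (g : V -> U) :
  lin f -> cancel f g -> cancel g f -> lin g.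
Proof.
move=> hf fK gK c x y; apply: (can_inj fK).
by rewrite hf !gK.
Qed.

Lemma section_ex (c : bool) (U V : lmodType R) (d : U -> V) (hd : lin d)
  (hs : forall y, exists x, d x = y) (f : V -> 'rV[R]_c) (hf : lin f) (fb : bijective f) :
  exists s : V -> U, lin s /\ forall w, d (s w) = w.
Proof.
case: c f hf fb => f hf [g fK gK].
  have [z0 hz0] := hs (g (const_mx 1)).
  exists (fun w => f w 0 0 *: z0); split.
    move=> a x y /=; rewrite hf !mxE.
    by rewrite scalerDl scalerA.
  move=> w; rewrite (linZ hd) hz0; apply: (can_inj fK).
  rewrite (linZ hf) gK; apply/matrixP => i j.
  by rewrite !mxE (ord1 i) (ord1 j) mulr1.
exists (fun _ => 0); split; first by move=> a x y; rewrite scaler0 addr0.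
move=> w; rewrite (lin0 hd); apply: (can_inj fK).
exact: rv_triv.
Qed.

Lemma retract_ex (U V W : lmodType R) (d0 : U -> V) (d1 : V -> W)
  (l0 : lin d0) (l1 : lin d1) (inj : injective d0)
  (ex : forall y, d1 y = 0 -> exists x, d0 x = y) (cx : forall x, d1 (d0 x) = 0)
  (s : W -> V) (ls : lin s) (hs : forall w, d1 (s w) = w) :
  exists rho : V -> U, lin rho /\ forall x, rho (d0 x) = x.
Proof.
have H : forall y, exists x, d0 x = y - s (d1 y).
  move=> y; apply: ex; by rewrite (linB l1) hs subrr.
pose pre y := proj1_sig (constructive_indefinite_description _ (H y)).
have preP : forall y, d0 (pre y) = y - s (d1 y).
  by move=> y; rewrite /pre; case: constructive_indefinite_description.
exists pre; split.
  move=> a x y; apply: inj; rewrite l0 !preP l1 ls.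
  by rewrite scalerBr addrACA opprD.
by move=> x; apply: inj; rewrite preP cx (lin0 ls) subr0.
Qed.
End Exist.

Theorem lemma5p3 (R : idomainType) (HR : PID R) (S T : stratum) (q : nat) :
  (0 < q)%N -> Ext_zero q (Irep R S) (Irep R T).
Proof.
move=> hq.
suff H : forall E : yext q (Irep R S) (Irep R T),
    clos_refl_sym_trans _ (@yext_mor R q _ _) E (E0 R S T q hq).
  move=> E E'; apply: rst_trans (H E) _; exact: rst_sym (H E').
move=> E.
have [q1|q2] : q = 1%N \/ (1 < q)%N by case: q hq E => [|[|q]] //; auto.
  subst q.
  have [g gK Kg] := yleft_iso E T.
  have glin : lin g := lin_inv _ _ _ _ _ (hcomp_lin (yleft E) T) gK Kg.
  have [sg [sglin sgsec]] := section_ex R (strat_le T S) _ _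
    (hcomp (ydiff E 1) T) (hcomp_lin (ydiff E 1) T) (ydiff_surj E T)
    (hcomp (yright E) T) (hcomp_lin (yright E) T) (yright_iso E T).
  have [rho [rholin rhoK]] := retract_ex R _ _ _ (hcomp (ydiff E 0) T)
    (hcomp (ydiff E 1) T) (hcomp_lin (ydiff E 0) T) (hcomp_lin (ydiff E 1) T) (ydiff_inj E T)
    (fun y hy => (ydiff_exact E 0 isT T y).1 hy) (fun x => dd _ _ _ _ E 0 T x isT)
    sg sglin sgsec.
  pose r := fun i => match i return rmod (yobj E i) T -> BT R T with
    | 0 => g | 1 => fun y => g (rho y) | _ => fun _ => 0 end.
  apply: rst_step; apply: (phi1_mor R S T 1 hq E r).
  - case=> [|[|i]] //= c x y; first by rewrite rholin glin.
    by rewrite scaler0 addr0.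
  - exact: gK.
  - by move=> y /=; rewrite rhoK.
have Hs : forall i, exists s : rmod (yobj E i.+2) T -> rmod (yobj E i.+1) T,
    lin s /\ ((i.+1 == q) -> forall w, hcomp (ydiff E i.+1) T (s w) = w).
  move=> i; case: (orP (orbN (i.+1 == q))) => [e|ne].
    move/eqP: e => e; subst q.
    have [s [sl ss]] := section_ex R (strat_le T S) _ _
      (hcomp (ydiff E i.+1) T) (hcomp_lin (ydiff E i.+1) T) (ydiff_surj E T)
      (hcomp (yright E) T) (hcomp_lin (yright E) T) (yright_iso E T).
    by exists s; split.
  exists (fun _ => 0); split; first by move=> a x y; rewrite scaler0 addr0.
  by move=> h; rewrite h in ne.
pose sig i := proj1_sig (constructive_indefinite_description _ (Hs i)).
have siglin : forall i, lin (sig i).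
  by move=> i; rewrite /sig; case: constructive_indefinite_description => s [].
have sigsec : forall i, (i.+1 == q) -> forall w, hcomp (ydiff E i.+1) T (sig i w) = w.
  by move=> i; rewrite /sig; case: constructive_indefinite_description => s [].
apply: rst_trans (rst_step _ _ _ _ (phi3_mor R S T q hq E q2 sig siglin sigsec)) _.
exact: rst_sym (rst_step _ _ _ _ (psi_mor R S T q hq E q2 sig siglin sigsec)).
Qed.
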